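(* Let $d\ge1$, $X=\{1,\dots,d+1\}$, integers $0\le m_1<\dots<m_{d+1}$, and $P$ the $d$-permutohedron, the convex hull of $\{\sum_i m_{i\pi}v_i:\pi\in\mathfrak S_{d+1}\}\subset\mathbb R^{d+1}$. For $\varnothing\ne J\subsetneq X$ let $a_J$ be the facet of $P$ which is the convex hull of the vertices $\sum_i m_{i\pi}v_i$ with $\sum_{j\in J}m_{j\pi}=m_1+\dots+m_{|J|}$. Then the face monoid of $P$ has a presentation with generators $a_J$ ($\varnothing\ne J\subsetneq X$) and relations $a_J^2=a_J$ for all $J$; $a_Ja_K=a_Ka_J$ for all $J,K$; and $a_Ja_K=a_Ja_Ka_L$ for all $J,K$ with $J\ne J\cap K\ne K$ and all $L$.
   Context: $v_1,\dots,v_{d+1}$ is the standard basis of $\mathbb R^{d+1}$. The face monoid of a polytope is the set of its faces (including the polytope itself and $\varnothing$) under intersection. *)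

(* Defs.v *)
From HB Require Import structures.
From mathcomp Require Import all_boot all_order all_algebra all_fingroup.
From mathcomp Require Import boolp classical_sets reals.
Unset Printing Implicit Defensive.
Import Order.TTheory GRing.Theory Num.Theory.
Local Open Scope ring_scope.
Local Open Scope classical_set_scope.

Definition perm_vertex (R : realType) (n : nat) (m : 'I_n -> nat) (s : 'S_n)
  : 'rV[R]_n := \row_i (m (s i))%:R.
Arguments perm_vertex R {n} m s.

Definition conv_hull (R : realType) (n : nat) (I : finType)
  (pts : I -> 'rV[R]_n) (A : {set I}) : set 'rV[R]_n :=
  [set x | exists w : I -> R,
     [/\ (forall i, 0 <= w i), (forall i, i \notin A -> w i = 0),
         \sum_i w i = 1 & x = \sum_i w i *: pts i]].

Definition permutohedron (R : realType) (n : nat) (m : 'I_n -> nat)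
  : set 'rV[R]_n := conv_hull R n _ (perm_vertex R m) [set: {perm 'I_n}]%SET.

Definition facet_a (R : realType) (n : nat) (m : 'I_n -> nat) (J : {set 'I_n})
  : set 'rV[R]_n :=
  conv_hull R n _ (perm_vertex R m)
    [set s : 'S_n | (\sum_(j in J) m (s j) == \sum_(i < n | (i < #|J|)%N) m i)%N].

Definition dotv (R : realType) (n : nat) (c x : 'rV[R]_n) : R :=
  \sum_i c 0 i * x 0 i.
Arguments dotv {R n}.

(* F is a face of P: the intersection of P with a supporting hyperplane
   (c = 0, delta = 0 gives P itself; c = 0, delta = 1 gives the empty face). *)
Definition is_face (R : realType) (n : nat) (P F : set 'rV[R]_n) : Prop :=
  exists (c : 'rV[R]_n) (delta : R),
    (forall x, P x -> dotv c x <= delta) /\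
    F = [set x | P x /\ dotv c x = delta].

Definition gen (n : nat) := {J : {set 'I_n} | (J != finset.set0) && (J != [set: 'I_n]%SET)}.

(* Evaluation of a word in the face monoid (product = intersection, unit = P). *)
Definition eval_word (R : realType) (n : nat) (m : 'I_n -> nat) (w : seq (gen n))
  : set 'rV[R]_n :=
  foldr (fun J S => facet_a R n m (val J) `&` S) (permutohedron R n m) w.

Arguments is_face {R n}.
Arguments eval_word R {n} m w.

Inductive rel_gen (n : nat) : seq (gen n) -> seq (gen n) -> Prop :=
| rel_idem (J : gen n) : rel_gen n [:: J; J] [:: J]
| rel_comm (J K : gen n) : rel_gen n [:: J; K] [:: K; J]
| rel_abs (J K L : gen n) :
    val J != (val J :&: val K)%SET -> (val J :&: val K)%SET != val K ->
    rel_gen n [:: J; K] [:: J; K; L].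

Inductive word_cong (n : nat) : seq (gen n) -> seq (gen n) -> Prop :=
| wc_rel u v l r : rel_gen n l r -> word_cong n (u ++ l ++ v) (u ++ r ++ v)
| wc_refl w : word_cong n w w
| wc_sym w1 w2 : word_cong n w1 w2 -> word_cong n w2 w1
| wc_trans w1 w2 w3 : word_cong n w1 w2 -> word_cong n w2 w3 -> word_cong n w1 w3.
Arguments permutohedron R {n} m.
Arguments facet_a R {n} m J.
Arguments rel_gen {n}.
Arguments word_cong {n}.

(* Main.v *)
Require Import Defs.
From HB Require Import structures.
From mathcomp Require Import all_boot all_order all_algebra all_fingroup.
From mathcomp Require Import boolp classical_sets reals.
From mathcomp Require Import zify ring lra.
Set Implicit Arguments. Unset Strict Implicit. Unset Printing Implicit Defensive.
Import Order.TTheory GRing.Theory Num.Theory.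
Local Open Scope ring_scope.
Local Open Scope classical_set_scope.
Definition iseg n k : {set 'I_n} := [set i : 'I_n | (i < k)%N].
Definition mn n (m : 'I_n -> nat) (J : {set 'I_n}) := (\sum_(i < n | (i < #|J|)%N) m i)%N.
Definition Lsum n (m : 'I_n -> nat) (J : {set 'I_n}) (s : 'S_n) := (\sum_(j in J) m (s j))%N.
Definition sat n (m : 'I_n -> nat) (s : 'S_n) (J : {set 'I_n}) := Lsum m J s == mn m J.

Lemma card_iseg n k : (k <= n)%N -> #|iseg n k| = k.
Proof.
move=> kn; rewrite -sum1_card.
have -> : (\sum_(i in iseg n k) 1 = \sum_(i < n | true && (i < k)%N) 1)%N.
  by apply: eq_bigl => i; rewrite /iseg inE.
rewrite (big_ord_narrow_cond (P := xpredT)) //=.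
by rewrite sum_nat_const card_ord muln1.
Qed.

Lemma mn_iseg n (m : 'I_n -> nat) J : mn m J = (\sum_(i in iseg n #|J|) m i)%N.
Proof. by apply: eq_bigl => i; rewrite /iseg inE. Qed.

Lemma minsum n (m : 'I_n -> nat) (Hm : forall i j : 'I_n, (i < j)%N -> (m i < m j)%N)
  (A : {set 'I_n}) :
  (mn m A <= \sum_(i in A) m i)%N /\
  ((\sum_(i in A) m i == mn m A)%N -> A = iseg n #|A|).
Proof.
rewrite mn_iseg.
set I := iseg n #|A|.
have cI : #|I| = #|A| by rewrite card_iseg // -[X in (_ <= X)%N](card_ord n) max_card.
have sA := big_setID (aop := addn) (idx := 0%N) I (A := A) m.
have sI := big_setID (aop := addn) (idx := 0%N) A (A := I) m.
rewrite /= in sA sI.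
rewrite sA sI finset.setIC.
set D1 := A :\: I; set D2 := I :\: A.
have cD : #|D1| = #|D2|.
  have h1 := cardsID I A; have h2 := cardsID A I.
  rewrite finset.setIC in h2. rewrite -/D1 -/D2 in h1 h2. lia.
have key : forall i j, i \in D1 -> j \in D2 -> (m j < m i)%N.
  move=> i j; rewrite /D1 /D2 /I !inE => /andP[iI _] /andP[_ jI].
  apply: Hm; lia.
have [D2e | [j0 j0D2]] := finset.set_0Vmem D2.
  have D1e : D1 = finset.set0 by apply/eqP; rewrite -cards_eq0 cD D2e finset.cards0.
  rewrite D1e D2e !finset.big_set0 !addn0; split => // _.
  apply/eqP; rewrite eqEcard cI leqnn andbT.
  by rewrite -finset.setD_eq0 -/D1 D1e.
have p0 : (0 < #|D2|)%N by apply/card_gt0P; exists j0.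
have [jm jmD2 eM] := eq_bigmax_cond m p0.
have h2 : (\sum_(j in D2) m j <= #|D2| * m jm)%N.
  rewrite -sum_nat_const; apply: leq_sum => j jD; rewrite -eM.
  by apply: leq_bigmax_cond.
have h1 : (#|D1| * (m jm).+1 <= \sum_(i in D1) m i)%N.
  rewrite -sum_nat_const; apply: leq_sum => i iD; exact: key.
have lt : (\sum_(j in D2) m j < \sum_(i in D1) m i)%N.
  rewrite cD in h1; rewrite mulnS in h1; lia.
split; first by rewrite leq_add2l ltnW.
by rewrite eqn_add2l => /eqP E; rewrite E ltnn in lt.
Qed.

Lemma Lsum_img n (m : 'I_n -> nat) J (s : 'S_n) :
  Lsum m J s = (\sum_(i in s @: J) m i)%N.
Proof. by rewrite /Lsum big_imset //; move=> x y _ _; apply: perm_inj. Qed.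

Lemma mn_card n (m : 'I_n -> nat) (A B : {set 'I_n}) : #|A| = #|B| -> mn m A = mn m B.
Proof. by rewrite /mn => ->. Qed.

Lemma sat_iseg n (m : 'I_n -> nat) (Hm : forall i j : 'I_n, (i < j)%N -> (m i < m j)%N)
  (s : 'S_n) (J : {set 'I_n}) : sat m s J = (s @: J == iseg n #|J|).
Proof.
have c : #|s @: J| = #|J| by rewrite card_imset //; apply: perm_inj.
rewrite /sat Lsum_img; have [_ eq] := minsum Hm (s @: J).
rewrite (mn_card m c) c in eq.
apply/idP/idP; first by move=> H; apply/eqP; apply: eq.
by move/eqP => ->; rewrite mn_iseg.
Qed.

Lemma sat_lt n (m : 'I_n -> nat) (Hm : forall i j : 'I_n, (i < j)%N -> (m i < m j)%N)
  (s : 'S_n) (J : {set 'I_n}) a b : sat m s J -> a \in J -> b \notin J -> (s a < s b)%N.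
Proof.
rewrite sat_iseg // => /eqP E aJ bJ.
have ha : s a \in s @: J by rewrite mem_imset //; apply: perm_inj.
have hb : s b \notin s @: J by rewrite mem_imset //; apply: perm_inj.
rewrite E /iseg !inE in ha hb; lia.
Qed.

Lemma lt_sat n (m : 'I_n -> nat) (Hm : forall i j : 'I_n, (i < j)%N -> (m i < m j)%N)
  (s : 'S_n) (J : {set 'I_n}) : (forall a b, a \in J -> b \notin J -> (s a < s b)%N) -> sat m s J.
Proof.
move=> H; rewrite sat_iseg //.
have c : #|s @: J| = #|J| by rewrite card_imset //; apply: perm_inj.
have ci : #|iseg n #|J| | = #|J| by rewrite card_iseg // -[X in (_ <= X)%N](card_ord n) max_card.
have sub : s @: J \subset iseg n #|J|.
  apply/fintype.subsetP => y yD; rewrite /iseg inE; rewrite ltnNge; apply/negP => ky.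
  have sub2 : iseg n #|J| \subset s @: J.
    apply/fintype.subsetP => x; rewrite /iseg inE => xk.
    case/imsetP: yD => a aJ ya.
    have -> : x = s ((s^-1)%g x) by rewrite permKV.
    rewrite mem_imset; last by apply: perm_inj.
    apply/negPn/negP => nJ.
    have := H a _ aJ nJ; rewrite permKV -ya => yx.
    by move: (ltn_trans yx xk); rewrite ltnNge ky.
  have pr : iseg n #|J| \proper s @: J.
    rewrite properE sub2 /=; apply/negP => /fintype.subsetP /(_ y yD).
    by rewrite /iseg inE ltnNge ky.
  have := proper_card pr; rewrite c ci ltnn //.
by rewrite eqEcard sub ci c leqnn.
Qed.

Lemma dotv_sum (R : realType) n (I : finType) (c : 'rV[R]_n) (w : I -> R) (pts : I -> 'rV[R]_n) :
  dotv c (\sum_s w s *: pts s) = \sum_s w s * dotv c (pts s).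
Proof.
rewrite /dotv.
under eq_bigr => i _ do rewrite summxE big_distrr /=.
rewrite exchange_big /=; apply: eq_bigr => s _.
rewrite big_distrr /=; apply: eq_bigr => i _; rewrite mxE; ring.
Qed.

Lemma dotv_add (R : realType) n (c1 c2 x : 'rV[R]_n) :
  dotv (c1 + c2) x = dotv c1 x + dotv c2 x.
Proof. by rewrite /dotv -big_split /=; apply: eq_bigr => i _; rewrite mxE mulrDl. Qed.

Lemma dotv0 (R : realType) n (x : 'rV[R]_n) : dotv 0 x = 0.
Proof. by rewrite /dotv big1 // => i _; rewrite mxE mul0r. Qed.

Lemma hull_pt (R : realType) n (I : finType) (pts : I -> 'rV[R]_n) (B : {set I}) s :
  s \in B -> conv_hull R n I pts B (pts s).
Proof.
move=> sB; exists (fun t => (t == s)%:R); split.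
- by move=> i; rewrite ler0n.
- by move=> i iB; case: eqP => // e; rewrite e sB in iB.
- by rewrite (bigD1 s) //= eqxx big1 ?addr0 // => t /negbTE ->.
- by rewrite (bigD1 s) //= eqxx scale1r big1 ?addr0 // => t /negbTE ->; rewrite scale0r.
Qed.

Lemma hull_set0 (R : realType) n (I : finType) (pts : I -> 'rV[R]_n) :
  conv_hull R n I pts finset.set0 = set0.
Proof.
apply/seteqP; split => x //= [w [_ w0 s1 _]].
by move: s1; rewrite big1 // => [/eqP|i _]; [rewrite eq_sym oner_eq0 | rewrite w0 // inE].
Qed.

Lemma G0 (R : realType) n (I : finType) (pts : I -> 'rV[R]_n) (B : {set I}) c delta x :
  (forall s, dotv c (pts s) <= delta) -> conv_hull R n I pts B x -> dotv c x <= delta.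
Proof.
move=> H [w [w0 _ s1 ->]]; rewrite dotv_sum.
apply: le_trans (_ : \sum_s w s * delta <= delta).
  by apply: ler_sum => s _; apply: ler_wpM2l.
by rewrite -mulr_suml s1 mul1r.
Qed.

Lemma G (R : realType) n (I : finType) (pts : I -> 'rV[R]_n) c delta :
  (forall s, dotv c (pts s) <= delta) ->
  conv_hull R n I pts [set s | dotv c (pts s) == delta]%SET =
  [set x | conv_hull R n I pts [set: I]%SET x /\ dotv c x = delta].
Proof.
move=> H; apply/seteqP; split => x /=.
  move=> [w [w0 wB s1 ->]]; split.
    by exists w; split => // i; rewrite inE.
  rewrite dotv_sum; rewrite -[RHS]mul1r -s1 mulr_suml; apply: eq_bigr => s _.
  case: (boolP (s \in [set s | dotv c (pts s) == delta]%SET)).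
    by rewrite inE => /eqP ->.
  by move=> /wB ->; rewrite !mul0r.
move=> [[w [w0 _ s1 ->]] e]; exists w; split => // s.
rewrite inE => ne.
have z : \sum_t w t * (delta - dotv c (pts t)) = 0.
  under eq_bigr => t _ do rewrite mulrBr.
  by rewrite sumrB -mulr_suml s1 mul1r -dotv_sum e subrr.
have nn : forall t, 0 <= w t * (delta - dotv c (pts t)).
  by move=> t; apply: mulr_ge0; rewrite // subr_ge0.
have := psumr_eq0P (P := xpredT) (fun t _ => nn t) z (i := s) erefl.
move/eqP; rewrite mulf_eq0 subr_eq0 [delta == _]eq_sym (negbTE ne) orbF.
by move/eqP.
Qed.

Definition cJ (R : realType) n (J : {set 'I_n}) : 'rV[R]_n := \row_i (- ((i \in J)%:R)).
Definition dJ (R : realType) n (m : 'I_n -> nat) (J : {set 'I_n}) : R := - ((mn m J)%:R).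
Definition cw (R : realType) n (w : seq (gen n)) : 'rV[R]_n :=
  foldr (fun J c => cJ R (val J) + c) 0 w.
Definition dw (R : realType) n (m : 'I_n -> nat) (w : seq (gen n)) : R :=
  foldr (fun J d => dJ R m (val J) + d) 0 w.
Definition Vw n (m : 'I_n -> nat) (w : seq (gen n)) (s : 'S_n) := all (fun J => sat m s (val J)) w.

Lemma dot_cJ (R : realType) n (m : 'I_n -> nat) (J : {set 'I_n}) s :
  dotv (cJ R J) (perm_vertex R m s) = - ((Lsum m J s)%:R).
Proof.
rewrite /dotv /Lsum natr_sum -sumrN [RHS]big_mkcond /=; apply: eq_bigr => i _.
rewrite !mxE; case: (i \in J); rewrite ?mulN1r ?mul1r ?oppr0 ?mulN1r //.
by rewrite mul0r.
Qed.

Lemma vert_cJ (R : realType) n (m : 'I_n -> nat)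
  (Hm : forall i j : 'I_n, (i < j)%N -> (m i < m j)%N) (J : {set 'I_n}) s :
  dotv (cJ R J) (perm_vertex R m s) <= dJ R m J /\
  (dotv (cJ R J) (perm_vertex R m s) = dJ R m J <-> sat m s J).
Proof.
rewrite dot_cJ /dJ lerN2 ler_nat; split.
  have c : #|s @: J| = #|J| by rewrite card_imset //; apply: perm_inj.
  by rewrite Lsum_img -(mn_card m c); have [] := minsum Hm (s @: J).
split; first by move/oppr_inj/eqP; rewrite eqr_nat.
by move/eqP => ->.
Qed.

Lemma vert_cw (R : realType) n (m : 'I_n -> nat)
  (Hm : forall i j : 'I_n, (i < j)%N -> (m i < m j)%N) (w : seq (gen n)) s :
  dotv (cw R w) (perm_vertex R m s) <= dw R m w /\
  (dotv (cw R w) (perm_vertex R m s) = dw R m w <-> Vw m w s).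
Proof.
elim: w => [|J w [le1 eq1]] /=; first by rewrite dotv0.
have [le2 eq2] := vert_cJ R Hm (val J) s.
rewrite dotv_add; split; first by apply: lerD.
split.
  move=> e; apply/andP; split.
    by apply/eq2; apply/eqP; rewrite eq_le le2 /=; lra.
  by apply/eq1; apply/eqP; rewrite eq_le le1 /=; lra.
by move=> /andP[/eq2 -> /eq1 ->].
Qed.

Lemma facet_eq (R : realType) n (m : 'I_n -> nat)
  (Hm : forall i j : 'I_n, (i < j)%N -> (m i < m j)%N) (J : {set 'I_n}) :
  facet_a R m J = [set x | permutohedron R m x /\ dotv (cJ R J) x = dJ R m J].
Proof.
rewrite /facet_a -G; last by move=> s; have [] := vert_cJ R Hm J s.
congr conv_hull; apply/setP => s; rewrite !inE.
have [_ e] := vert_cJ R Hm J s.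
apply/idP/eqP; first by move=> H; apply/e.
by move/e.
Qed.

Lemma eval_eq (R : realType) n (m : 'I_n -> nat)
  (Hm : forall i j : 'I_n, (i < j)%N -> (m i < m j)%N) (w : seq (gen n)) :
  eval_word R m w = [set x | permutohedron R m x /\ dotv (cw R w) x = dw R m w].
Proof.
elim: w => [|J w IH] /=.
  by apply/seteqP; split => x /=; [move=> Px; rewrite dotv0 | case].
rewrite /eval_word /= -/(eval_word R m w) IH facet_eq //.
apply/seteqP; split => x /=.
  by move=> [[Px e1] [_ e2]]; split => //; rewrite dotv_add e1 e2.
move=> [Px e]; rewrite dotv_add in e.
have l1 : dotv (cJ R (val J)) x <= dJ R m (val J).
  by apply: (G0 _ Px) => s; have [] := vert_cJ R Hm (val J) s.
have l2 : dotv (cw R w) x <= dw R m w.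
  by apply: (G0 _ Px) => s; have [] := vert_cw R Hm w s.
by split; split => //; apply/eqP; rewrite eq_le ?l1 ?l2 /=; lra.
Qed.

Lemma eval_hull (R : realType) n (m : 'I_n -> nat)
  (Hm : forall i j : 'I_n, (i < j)%N -> (m i < m j)%N) (w : seq (gen n)) :
  eval_word R m w = conv_hull R n _ (perm_vertex R m) [set s | Vw m w s]%SET.
Proof.
rewrite eval_eq // -G; last by move=> s; have [] := vert_cw R Hm w s.
congr conv_hull; apply/setP => s; rewrite !inE.
have [_ e] := vert_cw R Hm w s.
by apply/eqP/idP => /e.
Qed.

Lemma eval_vertex (R : realType) n (m : 'I_n -> nat)
  (Hm : forall i j : 'I_n, (i < j)%N -> (m i < m j)%N) (w : seq (gen n)) s :
  eval_word R m w (perm_vertex R m s) <-> Vw m w s.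
Proof.
rewrite eval_eq //=; have [_ e] := vert_cw R Hm w s; split.
  by case=> _ /e.
move=> /e ->; split => //; apply: hull_pt; exact: finset.in_setT.
Qed.

Lemma phiE (R : realType) n (m : 'I_n -> nat) (c : 'rV[R]_n) (s : 'S_n) :
  dotv c (perm_vertex R m s) = \sum_i c 0 i * (m (s i))%:R.
Proof. by apply: eq_bigr => i _; rewrite mxE. Qed.

Lemma exch (R : realType) n (m : 'I_n -> nat)
  (Hm : forall i j : 'I_n, (i < j)%N -> (m i < m j)%N) (c : 'rV[R]_n) (s : 'S_n) :
  (forall t, dotv c (perm_vertex R m t) <= dotv c (perm_vertex R m s)) ->
  forall i j, c 0 i < c 0 j -> (s i < s j)%N.
Proof.
move=> H i j cij.
have ij : i != j by apply/eqP => e; rewrite e ltxx in cij.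
rewrite ltnNge; apply/negP => le.
have ne : s j != s i by apply/eqP => /perm_inj e; rewrite e eqxx in ij.
have lt : (s j < s i)%N by rewrite ltn_neqAle le andbT; apply/eqP => /val_inj e; rewrite e eqxx in ne.
have mlt : ((m (s j))%:R < (m (s i))%:R :> R) by rewrite ltr_nat; apply: Hm.
set t := (tperm i j * s)%g.
have := H t; rewrite !phiE -subr_ge0 -sumrB.
rewrite (bigD1 i) // (bigD1 j) 1?eq_sym //= big1; last first.
  move=> x /andP[xj xi]; rewrite /t permM tpermD 1?eq_sym //; ring.
rewrite /t !permM tpermL tpermR addr0.
set a := c 0 i; set b := c 0 j; set p := (m (s i))%:R; set q := (m (s j))%:R.
move=> h.
have : 0 < (b - a) * (p - q) by apply: mulr_gt0; rewrite subr_gt0.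
move: h; rewrite -/q -/p => h h2.
have e : a * p - a * q + (b * q - b * p) = - ((b - a) * (p - q)) by ring.
rewrite -/a -/b in h.
move: h; rewrite e oppr_ge0 => h.
by move: (lt_le_trans h2 h); rewrite ltxx.
Qed.

Definition cmono (R : realType) n (c : 'rV[R]_n) (s : 'S_n) :=
  forall a b, c 0 a < c 0 b -> (s a < s b)%N.

Lemma sorted_cmono (R : realType) n (c : 'rV[R]_n) (s : 'S_n) :
  cmono c s -> sorted <=%O [seq c 0 ((s^-1)%g k) | k <- enum 'I_n].
Proof.
move=> H; rewrite sorted_map.
have so : sorted (relpre (@nat_of_ord n) ltn) (enum 'I_n).
  by rewrite -sorted_map val_enum_ord iota_ltn_sorted.
apply: sub_sorted so => a b /= ab.
rewrite leNgt; apply/negP => /H; rewrite !permKV => ba.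
by move: (ltn_trans ab ba); rewrite ltnn.
Qed.

Lemma perm_cmono (R : realType) n (c : 'rV[R]_n) (s : 'S_n) :
  perm_eq [seq c 0 ((s^-1)%g k) | k <- enum 'I_n] [seq c 0 k | k <- enum 'I_n].
Proof.
have -> : [seq c 0 ((s^-1)%g k) | k <- enum 'I_n] = map (c 0) (map (s^-1)%g (enum 'I_n)).
  by elim: (enum 'I_n) => //= x l ->.
apply: perm_map; apply: uniq_perm.
- by rewrite map_inj_uniq ?enum_uniq //; apply: perm_inj.
- exact: enum_uniq.
move=> x; rewrite mem_enum; apply/mapP; exists (s x); first by rewrite mem_enum.
by rewrite permK.
Qed.

Lemma cmono_unique (R : realType) n (m : 'I_n -> nat) (c : 'rV[R]_n) (s1 s2 : 'S_n) :
  cmono c s1 -> cmono c s2 ->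
  dotv c (perm_vertex R m s1) = dotv c (perm_vertex R m s2).
Proof.
move=> H1 H2.
have E : [seq c 0 ((s1^-1)%g k) | k <- enum 'I_n] = [seq c 0 ((s2^-1)%g k) | k <- enum 'I_n].
  apply: Order.POrderTheory.le_sorted_eq; [exact: sorted_cmono | exact: sorted_cmono |].
  apply: perm_trans (perm_cmono c s1) _; rewrite perm_sym; exact: perm_cmono.
have E2 := (iffRL (eq_in_map _ _ _) E).
have re : forall s : 'S_n, dotv c (perm_vertex R m s) = \sum_k c 0 ((s^-1)%g k) * (m k)%:R.
  move=> s; rewrite phiE (reindex_inj (@perm_inj _ (s^-1)%g)) /=.
  by apply: eq_bigr => i _; rewrite permKV.
rewrite !re; apply: eq_bigr => k _; rewrite E2 // mem_enum //.
Qed.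

Lemma mkgen n (J : {set 'I_n}) a b : a \in J -> b \notin J -> exists u : gen n, val u = J.
Proof.
move=> aJ bJ.
have P : (J != finset.set0) && (J != [set: 'I_n]%SET).
  apply/andP; split; apply/eqP => e; [by rewrite e inE in aJ | by rewrite e inE in bJ].
by exists (exist _ J P).
Qed.

Definition wc (R : realType) n (c : 'rV[R]_n) : seq (gen n) :=
  pmap (fun i => insub [set j | c 0 j <= c 0 i]%SET) (enum 'I_n).

Lemma in_wc (R : realType) n (c : 'rV[R]_n) (u : gen n) i :
  val u = [set j | c 0 j <= c 0 i]%SET -> u \in wc c.
Proof.
move=> H; rewrite mem_pmap; apply/mapP; exists i; first by rewrite mem_enum.
by rewrite -H valK.
Qed.

Lemma wc_in (R : realType) n (c : 'rV[R]_n) (u : gen n) :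
  u \in wc c -> exists i, val u = [set j | c 0 j <= c 0 i]%SET.
Proof.
rewrite mem_pmap => /mapP[i _]; case: insubP => [v _ vv [->]|//].
by exists i; rewrite vv.
Qed.

Lemma Vw_incomp n (m : 'I_n -> nat)
  (Hm : forall i j : 'I_n, (i < j)%N -> (m i < m j)%N) (w : seq (gen n)) (J K : gen n) s :
  J \in w -> K \in w -> ~~ (val J \subset val K) -> ~~ (val K \subset val J) -> ~~ Vw m w s.
Proof.
move=> Jw Kw /subsetPn[a aJ aK] /subsetPn[b bK bJ]; apply/negP => /allP V.
have h1 := sat_lt Hm (V J Jw) aJ bJ.
have h2 := sat_lt Hm (V K Kw) bK aK.
by move: (ltn_trans h1 h2); rewrite ltnn.
Qed.

Lemma face_char (R : realType) n (m : 'I_n -> nat)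
  (Hm : forall i j : 'I_n, (i < j)%N -> (m i < m j)%N) (c : 'rV[R]_n) (s0 : 'S_n) :
  (forall t, dotv c (perm_vertex R m t) <= dotv c (perm_vertex R m s0)) ->
  forall s, (dotv c (perm_vertex R m s) == dotv c (perm_vertex R m s0)) = Vw m (wc c) s.
Proof.
move=> H0 s; apply/eqP/idP.
  move=> e; have Hs : forall t, dotv c (perm_vertex R m t) <= dotv c (perm_vertex R m s).
    by move=> t; rewrite e.
  have cm := exch Hm Hs.
  apply/allP => u /wc_in [i ->]; apply: lt_sat => // a b; rewrite !inE => ai.
  rewrite -ltNge => ib; apply: cm; exact: le_lt_trans ai ib.
move=> /allP V.
have cm : cmono c s.
  move=> a b ab.
  have aJ : a \in [set j | c 0 j <= c 0 a]%SET by rewrite inE.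
  have bJ : b \notin [set j | c 0 j <= c 0 a]%SET by rewrite inE -ltNge.
  have [u vu] := mkgen aJ bJ.
  have uw : u \in wc c by apply: (in_wc (i := a)).
  have := sat_lt Hm (V u uw); rewrite vu; exact.
apply: cmono_unique => // a b. exact: (@exch R n m Hm c s0 H0 a b).
Qed.

Lemma wrel n (u v l r : seq (gen n)) : rel_gen l r -> word_cong (u ++ l ++ v) (u ++ r ++ v).
Proof. exact: wc_rel. Qed.
Lemma wrefl n (w : seq (gen n)) : word_cong w w.
Proof. exact: wc_refl. Qed.
Lemma wsym n (w1 w2 : seq (gen n)) : word_cong w1 w2 -> word_cong w2 w1.
Proof. exact: wc_sym. Qed.
Lemma wtrans n (w1 w2 w3 : seq (gen n)) : word_cong w1 w2 -> word_cong w2 w3 -> word_cong w1 w3.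
Proof. exact: wc_trans. Qed.
Lemma ridem n (J : gen n) : rel_gen [:: J; J] [:: J].
Proof. exact: rel_idem. Qed.
Lemma rcomm n (J K : gen n) : rel_gen [:: J; K] [:: K; J].
Proof. exact: rel_comm. Qed.
Lemma rabs n (J K L : gen n) : val J != (val J :&: val K)%SET -> (val J :&: val K)%SET != val K ->
    rel_gen [:: J; K] [:: J; K; L].
Proof. exact: rel_abs. Qed.

Lemma cong_ctx n (u v w1 w2 : seq (gen n)) :
  word_cong w1 w2 -> word_cong (u ++ w1 ++ v) (u ++ w2 ++ v).
Proof.
elim => {w1 w2}.
- move=> u' v' l r H.
  have -> : u ++ (u' ++ l ++ v') ++ v = (u ++ u') ++ l ++ (v' ++ v) by rewrite !catA.
  have -> : u ++ (u' ++ r ++ v') ++ v = (u ++ u') ++ r ++ (v' ++ v) by rewrite !catA.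
  exact: wrel.
- move=> w; exact: wrefl.
- move=> w1 w2 _ H; exact: wsym.
- move=> w1 w2 w3 _ H1 _ H2; exact: wtrans H1 H2.
Qed.

Lemma cong_cons n (x : gen n) w1 w2 : word_cong w1 w2 -> word_cong (x :: w1) (x :: w2).
Proof. by move=> H; have := cong_ctx [:: x] [::] H; rewrite /= !cats0. Qed.

Lemma cong_swap n (x y : gen n) w : word_cong (x :: y :: w) (y :: x :: w).
Proof. exact: (wrel [::] w (rcomm x y)). Qed.

Lemma cong_dup n (x : gen n) w : x \in w -> word_cong w (x :: w).
Proof.
elim: w => // y w IH; rewrite inE; case: eqP => [-> _ | _ /= xw].
  apply: wsym; exact: (wrel [::] w (ridem y)).
apply: wtrans (cong_cons y (IH xw)) _; exact: cong_swap.
Qed.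

Lemma cong_move n (x : gen n) u : word_cong (u ++ [:: x]) (x :: u).
Proof.
elim: u => [|y u IH] /=; first exact: wrefl.
apply: wtrans (cong_cons y IH) _; exact: cong_swap.
Qed.

Lemma cong_rem n (x : gen n) u v : x \in u -> word_cong (u ++ x :: v) (u ++ v).
Proof.
move=> xu.
have e : u ++ x :: v = [::] ++ (u ++ [:: x]) ++ v by rewrite -catA.
rewrite e; apply: wtrans (cong_ctx [::] v (cong_move x u)) _ => /=.
apply: wsym; apply: cong_dup; by rewrite mem_cat xu.
Qed.

Lemma cong_st2 n (u v : seq (gen n)) : {subset v <= u} -> word_cong (u ++ v) u.
Proof.
elim: v => [|a0 v0 IH] sv; first by rewrite cats0; exact: wrefl.
apply: wtrans (cong_rem _ _) (IH _); first by apply: sv; rewrite inE eqxx.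
by move=> y yv; apply: sv; rewrite inE yv orbT.
Qed.

Lemma cong_st1 n (w1 u : seq (gen n)) : {subset u <= w1} -> word_cong w1 (u ++ w1).
Proof.
elim: u => [|a0 u0 IH] su /=; first exact: wrefl.
apply: wtrans (IH _) _; first by move=> y yu; apply: su; rewrite inE yu orbT.
by apply: cong_dup; rewrite mem_cat su ?inE ?eqxx ?orbT.
Qed.

Lemma cong_support n (w1 w2 : seq (gen n)) :
  {subset w1 <= w2} -> {subset w2 <= w1} -> word_cong w1 w2.
Proof.
move=> s12 s21.
have st1 := @cong_st1 n w1.
have st2 := @cong_st2 n.
exact: wtrans (st1 _ s21) (st2 _ _ s12).
Qed.

Lemma cong_absorb1 n (w : seq (gen n)) (J K : gen n) :
  J \in w -> K \in w -> val J != (val J :&: val K)%SET -> (val J :&: val K)%SET != val K ->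
  forall L, word_cong w (L :: w).
Proof.
move=> Jw Kw h1 h2 L.
apply: wtrans (cong_dup Kw) _.
apply: wtrans (cong_dup (x := J) _) _; first by rewrite inE Jw orbT.
apply: wtrans (wrel [::] w (rabs L h1 h2)) _ => /=.
apply: cong_support => y; rewrite !inE.
  by case/or4P => [/eqP->|/eqP->|->|->] //; rewrite ?Jw ?Kw ?orbT.
by case/orP => ->; rewrite ?orbT.
Qed.

Lemma cong_absorb n (w : seq (gen n)) (J K : gen n) :
  J \in w -> K \in w -> val J != (val J :&: val K)%SET -> (val J :&: val K)%SET != val K ->
  forall u, word_cong w (u ++ w).
Proof.
move=> Jw Kw h1 h2; elim => [|L u IH] /=; first exact: wrefl.
apply: wtrans IH _; apply: (cong_absorb1 (J := J) (K := K)) => //; by rewrite mem_cat ?Jw ?Kw orbT.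
Qed.

Definition chainb n (w : seq (gen n)) :=
  all (fun K1 : gen n => all (fun K2 : gen n => (val K1 \subset val K2) || (val K2 \subset val K1)) w) w.

Lemma chainP n (w : seq (gen n)) K1 K2 : chainb w -> K1 \in w -> K2 \in w ->
  (val K1 \subset val K2) || (val K2 \subset val K1).
Proof. by move=> /allP H /H /allP H2 /H2. Qed.

Definition cnt n (w : seq (gen n)) (i : 'I_n) := count (fun K : gen n => i \notin val K) w.

Lemma count_le (T : eqType) (p q : pred T) (w : seq T) :
  {in w, forall y, p y -> q y} -> (count p w <= count q w)%N.
Proof.
elim: w => //= y w IH H.
have H1 : {in w, forall y, p y -> q y} by move=> z zw; apply: H; rewrite inE zw orbT.
have := IH H1; have := H y (mem_head _ _); case: (p y); case: (q y) => //= h; try lia.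
Qed.

Lemma count_lt (T : eqType) (p q : pred T) (w : seq T) :
  {in w, forall y, p y -> q y} -> (exists2 y, y \in w & q y && ~~ p y) ->
  (count p w < count q w)%N.
Proof.
elim: w => [|y w IH] H [z]; first by [].
have H1 : {in w, forall y, p y -> q y} by move=> u uw; apply: H; rewrite inE uw orbT.
have le := count_le H1.
rewrite inE => /orP[/eqP -> /andP[qy npy] | zw qz] /=.
  by rewrite qy (negbTE npy) /=; lia.
have := IH H1 (ex_intro2 _ _ z zw qz); have := H y (mem_head _ _).
case: (p y); case: (q y) => //= h; try lia.
Qed.

Lemma cnt_lt n (w : seq (gen n)) (K : gen n) a b : chainb w -> K \in w ->
  a \in val K -> b \notin val K -> (cnt w a < cnt w b)%N.
Proof.
move=> ch Kw aK bK; apply: count_lt.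
  move=> y yw /= ay; case/orP: (chainP ch yw Kw) => sub.
    by apply/negP => hb; move: bK; rewrite (fintype.subsetP sub _ hb).
  by move: ay; rewrite (fintype.subsetP sub _ aK).
by exists K => //=; rewrite bK aK.
Qed.

Lemma chain_witness (R : realType) n (m : 'I_n -> nat)
  (Hm : forall i j : 'I_n, (i < j)%N -> (m i < m j)%N) (w : seq (gen n)) (J : {set 'I_n}) :
  chainb w -> exists s, Vw m w s /\
    (J != finset.set0 -> J != [set: 'I_n]%SET -> (forall K, K \in w -> val K != J) -> ~~ sat m s J).
Proof.
move=> ch.
pose c : 'rV[R]_n := \row_i ((2 * cnt w i + (i \in J))%:R).
have [s0 _ smax] := @Order.TotalTheory.arg_maxP _ R _ 1%g xpredT
   (fun t => dotv c (perm_vertex R m t)) isT.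
have smax' : forall t, dotv c (perm_vertex R m t) <= dotv c (perm_vertex R m s0).
  by move=> t; apply: smax.
have cm := exch Hm smax'.
have cmp : forall a b, (2 * cnt w a + (a \in J) < 2 * cnt w b + (b \in J))%N -> (s0 a < s0 b)%N.
  by move=> a b h; apply: cm; rewrite !mxE ltr_nat.
exists s0; split.
  apply/allP => K Kw; apply: (lt_sat Hm) => a b aK bK; apply: cmp.
  have := cnt_lt ch Kw aK bK; case: (a \in J); case: (b \in J) => /=; lia.
move=> J0 JT JK; apply/negP => sJ.
case: (boolP [exists i, exists j, (i \notin J) && (j \in J) && (cnt w i <= cnt w j)%N]).
  move=> /existsP[i /existsP[j /andP[/andP[iJ jJ] le]]].
  have h1 : (s0 i < s0 j)%N by apply: cmp; rewrite (negbTE iJ) jJ /=; lia.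
  have h2 := sat_lt Hm sJ jJ iJ.
  by move: (ltn_trans h1 h2); rewrite ltnn.
move=> /existsPn H.
have H' : forall i j, i \notin J -> j \in J -> (cnt w j < cnt w i)%N.
  move=> i j iJ jJ; have := H i => /existsPn /(_ j); rewrite iJ jJ /= -ltnNge //.
case: (pickP [pred i | i \notin J]) => [i1 i1J | none]; last first.
  have e : J = [set: 'I_n]%SET by apply/setP => i; have := none i; rewrite !inE /= => /negbFE ->.
  by rewrite e eqxx in JT.
have [j0 j0J] : exists j0, j0 \in J.
  case: (finset.set_0Vmem J) => [e|[x xJ]]; [by rewrite e eqxx in J0 | by exists x].
have [i0 i0J i0min] := arg_minnP (cnt w) i1J.
have pos : (0 < cnt w i0)%N by have := H' _ _ i0J j0J; lia.
rewrite /cnt -has_count in pos; case/hasP: pos => K1 K1w i0K1.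
have P1 : (K1 \in w) && (i0 \notin val K1) by rewrite K1w i0K1.
have [Ks /andP[Ksw i0Ks] Ksmax] := @arg_maxnP _ K1 (fun K : gen n => (K \in w) && (i0 \notin val K)) (fun K : gen n => #|val K|) P1.
have := JK _ Ksw; rewrite finset.eqEsubset => /negP; apply; apply/andP; split; apply/fintype.subsetP.
  move=> x xKs; apply/negPn/negP => xJ.
  have h2 := i0min x xJ; have h1 := cnt_lt ch Ksw xKs i0Ks.
  by move: (leq_trans h1 h2); rewrite ltnn.
move=> j jJ; apply/negPn/negP => jKs.
have lt := H' _ _ i0J jJ.
have le : (cnt w i0 <= cnt w j)%N.
  apply: count_le => y yw /= i0y.
  case/orP: (chainP ch yw Ksw) => sub.
    by apply/negP => jy; move: jKs; rewrite (fintype.subsetP sub _ jy).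
  have cy : (#|val y| <= #|val Ks|)%N by apply: Ksmax; rewrite yw i0y.
  have e : val Ks = val y by apply/eqP; rewrite eqEcard sub cy.
  by rewrite -e.
by move: (leq_trans lt le); rewrite ltnn.
Qed.

Lemma incomp_l n (A B : {set 'I_n}) : (A != A :&: B) = ~~ (A \subset B).
Proof. by rewrite (sameP finset.setIidPl eqP) eq_sym. Qed.

Lemma incomp_r n (A B : {set 'I_n}) : (A :&: B != B) = ~~ (B \subset A).
Proof. by rewrite (sameP finset.setIidPr eqP). Qed.

Lemma Vw_cat n (m : 'I_n -> nat) u v s : Vw m (u ++ v) s = Vw m u s && Vw m v s.
Proof. by rewrite /Vw all_cat. Qed.

Lemma Vw_cong n (m : 'I_n -> nat)
  (Hm : forall i j : 'I_n, (i < j)%N -> (m i < m j)%N) (w1 w2 : seq (gen n)) :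
  word_cong w1 w2 -> forall s, Vw m w1 s = Vw m w2 s.
Proof.
elim => {w1 w2}.
- move=> u v l r [J|J K|J K L h1 h2] s; rewrite !Vw_cat; congr (_ && (_ && _)).
  + by rewrite /Vw /= andbA andbb.
  + by rewrite /Vw /= andbCA.
  + rewrite incomp_l in h1; rewrite incomp_r in h2.
    rewrite (negbTE (@Vw_incomp _ _ Hm [:: J; K] _ _ s _ _ h1 h2)) ?inE ?eqxx ?orbT //.
    by rewrite (negbTE (@Vw_incomp _ _ Hm [:: J; K; L] _ _ s _ _ h1 h2)) ?inE ?eqxx ?orbT.
- by [].
- by move=> w1 w2 _ H s; rewrite H.
- by move=> w1 w2 w3 _ H1 _ H2 s; rewrite H1 H2.
Qed.

Lemma nonchain_ex n (w : seq (gen n)) : ~~ chainb w ->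
  exists J K, [/\ J \in w, K \in w, val J != (val J :&: val K)%SET & (val J :&: val K)%SET != val K].
Proof.
case/allPn => J Jw /allPn [K Kw]; rewrite negb_or => /andP[h1 h2].
by exists J, K; rewrite incomp_l incomp_r.
Qed.

Lemma nonchain_cong n (w1 w2 : seq (gen n)) : ~~ chainb w1 -> ~~ chainb w2 -> word_cong w1 w2.
Proof.
move=> /nonchain_ex [J1 [K1 [J1w K1w a1 b1]]] /nonchain_ex [J2 [K2 [J2w K2w a2 b2]]].
apply: wtrans (cong_absorb J1w K1w a1 b1 (enum [set: gen n]%SET)) _.
apply: wtrans _ (wsym (cong_absorb J2w K2w a2 b2 (enum [set: gen n]%SET))).
by apply: cong_support => x _; rewrite mem_cat mem_enum finset.in_setT.
Qed.

Lemma chain_sub (R : realType) n (m : 'I_n -> nat)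
  (Hm : forall i j : 'I_n, (i < j)%N -> (m i < m j)%N) (w1 w2 : seq (gen n)) :
  chainb w2 -> eval_word R m w1 = eval_word R m w2 -> {subset w1 <= w2}.
Proof.
move=> ch E J Jw1; apply/negPn/negP => Jw2.
have [s [V2 nsat]] := chain_witness R Hm (val J) ch.
have /andP[J0 JT] := valP J.
have : ~~ sat m s (val J).
  apply: nsat => // K Kw; apply/negP => /eqP /val_inj e.
  by move: Kw; rewrite e (negbTE Jw2).
have : eval_word R m w1 (perm_vertex R m s) by rewrite E; apply/eval_vertex.
move=> /eval_vertex => /(_ Hm) /allP /(_ J Jw1) ->.
by [].
Qed.

Lemma chain_nonempty (R : realType) n (m : 'I_n -> nat)
  (Hm : forall i j : 'I_n, (i < j)%N -> (m i < m j)%N) (w1 w2 : seq (gen n)) :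
  chainb w1 -> ~~ chainb w2 -> eval_word R m w1 <> eval_word R m w2.
Proof.
move=> ch /nonchain_ex [J [K [Jw Kw a b]]] E.
have [s [V1 _]] := chain_witness R Hm finset.set0 ch.
have : eval_word R m w2 (perm_vertex R m s) by rewrite -E; apply/eval_vertex.
move=> /eval_vertex => /(_ Hm).
rewrite incomp_l in a; rewrite incomp_r in b.
by rewrite (negbTE (Vw_incomp Hm s Jw Kw a b)).
Qed.

Theorem mainTheorem9 (R : realType) (d : nat) (m : 'I_d.+1 -> nat) :
  (1 <= d)%N ->
  (forall i j : 'I_d.+1, (i < j)%N -> (m i < m j)%N) ->
  [/\ (forall w : seq (gen d.+1),
         is_face (permutohedron R m) (eval_word R m w)),
      (forall F : set 'rV[R]_d.+1, is_face (permutohedron R m) F ->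
         exists w : seq (gen d.+1), eval_word R m w = F) &
      (forall w1 w2 : seq (gen d.+1),
         eval_word R m w1 = eval_word R m w2 <-> word_cong w1 w2)].
Proof.
move=> d1 Hm; split.
- move=> w; exists (cw R w), (dw R m w); split; last exact: eval_eq.
  by move=> x Px; apply: G0 Px => s; have [] := vert_cw R Hm w s.
- move=> F [c [delta [Hle ->]]].
  have vb : forall s, dotv c (perm_vertex R m s) <= delta.
    by move=> s; apply: Hle; apply: hull_pt; exact: finset.in_setT.
  have EG : [set x | permutohedron R m x /\ dotv c x = delta] =
            conv_hull R _ _ (perm_vertex R m) [set s | dotv c (perm_vertex R m s) == delta]%SET.
    by rewrite (G vb).
  rewrite EG.
  case: (boolP [exists s, dotv c (perm_vertex R m s) == delta]).
    move=> /existsP [s0 /eqP e0].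
    exists (wc c); rewrite eval_hull //; congr conv_hull; apply/setP => s; rewrite !inE.
    rewrite -(face_char Hm (s0 := s0)) ?e0 //.
  move=> /existsPn none.
  have ab : (ord0 : 'I_d.+1) != ord_max by rewrite -val_eqE /=; lia.
  have aJ : (ord0 : 'I_d.+1) \in [set ord0]%SET by rewrite inE.
  have bJ : (ord_max : 'I_d.+1) \notin [set ord0]%SET by rewrite inE eq_sym.
  have bK : (ord_max : 'I_d.+1) \in [set ord_max]%SET by rewrite inE.
  have aK : (ord0 : 'I_d.+1) \notin [set ord_max]%SET by rewrite inE.
  have [u vu] := mkgen aJ bJ.
  have [u' vu'] := mkgen bK aK.
  exists [:: u; u']; rewrite eval_hull //; congr conv_hull; apply/setP => s; rewrite !inE.
  rewrite (negbTE (none s)); apply/negbTE.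
  apply: (@Vw_incomp _ _ Hm [:: u; u'] u u' s); rewrite ?inE ?eqxx ?orbT // vu vu' !finset.sub1set !inE //.
  by rewrite eq_sym.
- move=> w1 w2; split.
    move=> E.
    case: (boolP (chainb w1)) => c1; case: (boolP (chainb w2)) => c2.
    + by apply: cong_support; apply: (chain_sub (R := R) Hm) => //.
    + by exfalso; apply: (chain_nonempty (R := R) Hm c1 c2).
    + by exfalso; apply: (chain_nonempty (R := R) Hm c2 c1).
    + exact: nonchain_cong.
  move=> H; rewrite !eval_hull //; congr conv_hull; apply/setP => s; rewrite !inE.
  exact: Vw_cong H s.
Qed.
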